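(* Let $(E,p,X)$ and $(F,q,Y)$ be étalé spaces over Boolean spaces and let $\varphi\colon(E,p,X)\to(F,q,Y)$ be a proper continuous relational covering morphism with underlying map $\overline{\varphi}\colon X\to Y$. Then the map $\hat\varphi\colon F^{\ast}\to E^{\ast}$, $x\mapsto\varphi^{-1}(x)$, is well defined and, together with the map $Y^{\ast}\to X^{\ast}$, $U\mapsto\overline{\varphi}^{-1}(U)$, is a morphism of Boolean sets from $\widetilde q\colon F^{\ast}\to Y^{\ast}$ to $\widetilde p\colon E^{\ast}\to X^{\ast}$.
   Context: A Boolean space is a Hausdorff space with a basis of compact-open sets. An étalé space $(E,p,X)$: surjective local homeomorphism $p\colon E\to X$. A local section is an open $A\subseteq E$ on which $p$ is injective. For an étalé space $(E,p,X)$, $X^{\ast}$ is the Boolean algebra of compact-open subsets of $X$, $E^{\ast}$ the set of compact-open local sections, $\widetilde p(C)=p(C)$, and restrictions are $C|^A_B=C\cap p^{-1}(B)$ for compact-open $A\supseteq B$ and $p(C)=A$; this is a Boolean set. A relational morphism $\varphi\colon(E,p,X)\to(F,q,Y)$: a map $\varphi\colon E\to\mathsf P(F)$ and a map $\overline{\varphi}\colon X\to Y$ with $\varphi(e)\subseteq q^{-1}(\overline{\varphi}(p(e)))$. Locally injective: $p(e)=p(e')$ and $\varphi(e)\cap\varphi(e')\neq\emptyset$ imply $e=e'$. Locally surjective: if $y\in F$ and $q(y)=\overline{\varphi}(u)$, $u\in X$, then some $e$ with $p(e)=u$ has $y\in\varphi(e)$. Relational covering morphism: both. $\varphi^{-1}(A)=\{e:\varphi(e)\cap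 A\neq\emptyset\}$; continuous/proper: preimages of open/compact sets are open/compact. Boolean sets and their morphisms: a ''Boolean algebra'' is a generalized Boolean algebra (relatively complemented distributive lattice with $0$). A Boolean set is a presheaf of sets $p\colon X\to B$ over a Boolean algebra (pairwise disjoint $X_e$, restrictions $x|^e_f$ for $e\ge f$, functorial) with all $X_e\ne\emptyset$, such that under the order $x\le y$ iff $p(x)\le p(y)$ and $x=y|^{p(y)}_{p(x)}$ there is a least element $0$, any $x,y$ with $x\wedge y$ existing and $p(x\wedge y)=p(x)\wedge p(y)$ have a join, and $p(x)=0\Rightarrow x=0$. A morphism of Boolean sets $(X,p,B_1)\to(Y,q,B_2)$ is $\psi\colon X\to Y$ with a Boolean algebra morphism $\overline{\psi}\colon B_1\to B_2$ such that $q\psi=\overline{\psi}p$ and $\psi(x|^a_b)=\psi(x)|^{\overline{\psi}(a)}_{\overline{\psi}(b)}$. *)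

(* Defs.v *)
From HB Require Import structures.
From mathcomp Require Import all_boot all_order.
From mathcomp Require Import all_classical all_reals all_analysis.
Set Implicit Arguments. Unset Strict Implicit. Unset Printing Implicit Defensive.
Local Open Scope classical_set_scope.

Definition boolean_space (X : topologicalType) : Prop :=
  hausdorff_space X /\
  (forall (A : set X) (x : X), open A -> A x ->
     exists B : set X, [/\ open B, compact B, B x & B `<=` A]).

(* p is a local homeomorphism: continuous, and every point has an open
   neighbourhood mapped injectively onto an open set, with the restriction
   an open map (hence a homeomorphism onto its open image). *)
Definition local_homeomorphism (E X : topologicalType) (p : E -> X) : Prop :=
  continuous p /\
  (forall e : E, exists U : set E,
     [/\ open U, U e, open (p @` U), {in U &, injective p} &
         (forall V : set E, open V -> V `<=` U -> open (p @` V))]).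

Definition etale (E X : topologicalType) (p : E -> X) : Prop :=
  (forall x : X, exists e : E, p e = x) /\ local_homeomorphism p.

Definition local_section (E X : topologicalType) (p : E -> X) (A : set E) :=
  open A /\ {in A &, injective p}.

Definition cpt_open (X : topologicalType) (U : set X) : Prop :=
  open U /\ compact U.

Definition sections_star (E X : topologicalType) (p : E -> X) (C : set E) :=
  compact C /\ local_section p C.

Definition restr (E X : topologicalType) (p : E -> X) (B : set X) (C : set E)
  : set E := C `&` p @^-1` B.

Definition relational_morphism (E X F Y : topologicalType) (p : E -> X)
  (q : F -> Y) (phi : E -> set F) (phibar : X -> Y) : Prop :=
  forall e : E, phi e `<=` q @^-1` [set phibar (p e)].

Definition rel_locally_injective (E X F : topologicalType) (p : E -> X)
  (phi : E -> set F) : Prop :=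
  forall e e' : E, p e = p e' -> phi e `&` phi e' !=set0 -> e = e'.

Definition rel_locally_surjective (E X F Y : topologicalType) (p : E -> X)
  (q : F -> Y) (phi : E -> set F) (phibar : X -> Y) : Prop :=
  forall (y : F) (u : X), q y = phibar u ->
    exists e : E, p e = u /\ phi e y.

Definition rel_preimage (E F : Type) (phi : E -> set F) (A : set F) : set E :=
  [set e | phi e `&` A !=set0].

Definition rel_continuous (E F : topologicalType) (phi : E -> set F) : Prop :=
  forall A : set F, open A -> open (rel_preimage phi A).

Definition rel_proper (E F : topologicalType) (phi : E -> set F) : Prop :=
  forall A : set F, compact A -> compact (rel_preimage phi A).

(* Morphism of generalized Boolean algebras Y^* -> X^* (the operations in
   X^*, Y^* are the set operations: 0 = empty, join = union, meet =
   intersection, relative complement = difference). *)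
Definition gba_morphism (X Y : topologicalType) (h : set Y -> set X) : Prop :=
  [/\ h set0 = set0,
      (forall U V, cpt_open U -> cpt_open V -> h (U `|` V) = h U `|` h V),
      (forall U V, cpt_open U -> cpt_open V -> h (U `&` V) = h U `&` h V) &
      (forall U V, cpt_open U -> cpt_open V -> h (U `\` V) = h U `\` h V)].

Definition boolset_morphism (E X F Y : topologicalType) (p : E -> X)
  (q : F -> Y) (psi : set F -> set E) (psibar : set Y -> set X) : Prop :=
  [/\ (forall x, sections_star q x -> sections_star p (psi x)),
      (forall U, cpt_open U -> cpt_open (psibar U)),
      gba_morphism psibar,
      (forall x, sections_star q x -> p @` (psi x) = psibar (q @` x)) &
      (forall (A B : set Y) (x : set F),
         cpt_open A -> cpt_open B -> B `<=` A ->
         sections_star q x -> q @` x = A ->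
         psi (restr q B x) = restr p (psibar B) (psi x))].

(* Main.v *)
Require Import Defs.
From mathcomp Require Import all_boot all_order.
From mathcomp Require Import all_classical all_reals all_analysis.
Local Open Scope classical_set_scope.

Lemma lh_open (E X : topologicalType) (p : E -> X) :
  local_homeomorphism p -> forall W, open W -> open (p @` W).
Proof.
move=> [_ lh] W oW; rewrite openE => _ [w Ww <-].
have [U [oU Uw _ _ opm]] := lh w.
have o : open (p @` (W `&` U)) by apply: opm; [exact: openI|exact: subIsetr].
have : nbhs (p w) (p @` (W `&` U)) by apply: open_nbhs_nbhs; split=> //; exists w.
by apply: filterS => _ [z [Wz _] <-]; exists z.
Qed.

Lemma lift_compact (F Y : topologicalType) (q : F -> Y) (V B : set F) (BB : set Y) :
  continuous q -> open V -> {in V &, injective q} ->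
  (forall W : set F, open W -> W `<=` V -> open (q @` W)) ->
  compact BB -> BB `<=` q @` V -> B = V `&` q @^-1` BB -> compact B.
Proof.
move=> qc oV inj opm cBB sBB eB; rewrite eB; move=> G PG GB.
have qGB : G (q @^-1` BB) by apply: filterS GB => z [].
have [b [BBb cl]] := cBB (q @ G) _ qGB.
have [s Vs qs] := sBB b BBb.
exists s; split; first (by split=> //=; rewrite qs).
move=> A0 N0 GA; rewrite nbhsE; move=> [W1 [oW Ws] sON].
have oO' : open (q @` (W1 `&` V)) by apply: opm; [exact: openI|exact: subIsetr].
have nb : nbhs b (q @` (W1 `&` V)).
  by apply: open_nbhs_nbhs; split=> //; exists s.
have qA : G (q @^-1` (q @` (A0 `&` (V `&` q @^-1` BB)))).
  by apply: filterS (filterI GA GB) => z Hz; exists z.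
have [_ [[a [Aa [Va _]] <-] [y0 [Wo Vo] qo]]] := cl _ _ qA nb.
have ao : a = y0 by apply: inj; rewrite ?in_setE // qo.
by exists a; split=> //; apply: sON; rewrite ao.
Qed.

Arguments lh_open {E X p}.
Arguments lift_compact {F Y q V B BB}.

Theorem lemma3p10 (E X F Y : topologicalType) (p : E -> X) (q : F -> Y)
  (phi : E -> set F) (phibar : X -> Y) :
  boolean_space X -> boolean_space Y ->
  etale p -> etale q ->
  relational_morphism p q phi phibar ->
  rel_locally_injective p phi ->
  rel_locally_surjective p q phi phibar ->
  rel_continuous phi -> rel_proper phi ->
  boolset_morphism p q (fun x : set F => rel_preimage phi x)
                       (fun U : set Y => phibar @^-1` U).
Proof.
move=> bX bY [psurj plh] [qsurj qlh] rm linj lsurj rc rp.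
have pbo : forall W, open W -> open (phibar @^-1` W).
  move=> W oW.
  have -> : phibar @^-1` W = p @` rel_preimage phi (q @^-1` W).
    apply/seteqP; split.
    - move=> u Wu; have [y qy] := qsurj (phibar u).
      have [e [pe ey]] := lsurj y u qy.
      by exists e => //; exists y; split => //; rewrite /preimage /= qy.
    - move=> _ [e [y [ey Wy]] <-]; rewrite /preimage /= -(rm e y ey); exact: Wy.
  apply: (lh_open plh); apply: rc; exact: ((continuousP _).1 qlh.1 W oW).
have pbc : continuous phibar by apply/continuousP.
split.
- move=> x [cx [ox injx]]; split; first exact: rp.
  split; first exact: rc.
  move=> e e'; rewrite !in_setE => [[y [ey xy]]] [y' [ey' xy']] pee.
  have qy := rm e y ey; have qy' := rm e' y' ey'.
  have yy : y = y'.
    by apply: injx; rewrite ?in_setE //; rewrite qy qy' pee.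
  by apply: (linj e e' pee); exists y; split=> //; rewrite yy.
- move=> U [oU cU]; split; first exact: pbo.
  rewrite compact_ultra => G UG GW.
  have [y [Uy cly]] := cU (phibar @ G) _ GW.
  have [f qf] := qsurj y.
  have [V [oV Vf oqV injV opmV]] := qlh.2 f.
  have [BB [oBB cBB BBy sBB]] := bY.2 (q @` V) y oqV (ex_intro2 _ _ f Vf qf).
  have cS : compact (V `&` q @^-1` BB) := lift_compact qlh.1 oV injV opmV cBB sBB erefl.
  have cK : compact (p @` rel_preimage phi (V `&` q @^-1` BB)).
    by apply: continuous_compact; [exact: continuous_subspaceT plh.1|exact: rp].
  have GB : G (phibar @^-1` BB).
    case: (in_ultra_setVsetC (phibar @^-1` BB) UG) => // GnB; exfalso.
    have nbB : nbhs y BB by apply: open_nbhs_nbhs.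
    by have [z [nz bz]] := cly (~` BB) _ GnB nbB.
  have GK : G (p @` rel_preimage phi (V `&` q @^-1` BB)).
    apply: filterS GB => u Bu; have [s Vs qs] := sBB _ Bu.
    have [e [pe es]] := lsurj s u qs.
    by exists e => //; exists s; split => //; split => //; rewrite /preimage /= qs.
  move: cK; rewrite compact_ultra => cK.
  have [x [Kx Gx]] := cK G UG GK.
  exists x; split => //.
  have clW : closed (phibar @^-1` U).
    apply: ((continuous_closedP phibar).1 pbc); exact: compact_closed bY.1 cU.
  apply: clW => N1 nN.
  exact: filter_ex (filterI GW (Gx _ nN)).
- split.
  + by rewrite preimage_set0.
  + by move=> U V _ _; rewrite preimage_setU.
  + by move=> U V _ _; rewrite preimage_setI.
  + by move=> U V _ _; apply/seteqP; split => z [].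
- move=> x _; apply/seteqP; split.
  + move=> _ [e [y [ey xy]] <-]; exists y => //; exact: rm e y ey.
  + move=> u [y xy qy]; have [e [pe ey]] := lsurj y u qy.
    by exists e => //; exists y.
- move=> A B x _ _ _ _ _; apply/seteqP; split.
  + move=> e [y [ey [xy By]]]; split; first by exists y.
    by rewrite /preimage /= -(rm e y ey).
  + move=> e [[y [ey xy]] Bpe]; exists y; split => //; split => //.
    by rewrite /preimage /= (rm e y ey).
Qed.
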